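(* For every integer $k\ge 1$ there is a constant $c_k>0$, depending only on $k$, such that the following holds. Let $D$ be a finite set with $|D|=2^L$ for some integer $L\ge 0$, let $n\ge 0$ and $T\ge 1$ be integers, and let $f:D^{n+1}\to\mathbb{R}$ be of the form $$f(x_0,x_1,\dots,x_n)=\sum_{t=1}^T f_t(x_0,x_1,\dots,x_n),$$ where each $f_t:D^{n+1}\to\mathbb{R}$ depends on at most $k$ of the variables $x_0,\dots,x_n$. Let $X_0,X_1,\dots,X_n$ be independent random variables, each uniformly distributed on $D$. Then $$\mathbb{E}\Big[\max_{x\in D} f(x,X_1,\dots,X_n)-f(X_0,X_1,\dots,X_n)\Big]\;\ge\; c_k\,T^{-1}|D|^{-k}\max_{x^+,x^-,x_1,\dots,x_n\in D}\big(f(x^+,x_1,\dots,x_n)-f(x^-,x_1,\dots,x_n)\big).$$ *)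

(* Defs.v *)
From mathcomp Require Import all_boot all_order all_algebra.
From mathcomp Require Import reals.
Set Implicit Arguments. Unset Strict Implicit. Unset Printing Implicit Defensive.
Import Order.TTheory GRing.Theory Num.Theory.
Local Open Scope ring_scope.

(* maximum of a real-valued function on a finite type (0 if the type is empty) *)
Definition fmax (R : realType) (A : finType) (g : A -> R) : R :=
  match [pick a : A] with
  | Some a0 => \big[Num.max/g a0]_(a : A) g a
  | None => 0
  end.

Definition setx0 (D : finType) (n : nat) (X : {ffun 'I_n.+1 -> D}) (x : D)
  : {ffun 'I_n.+1 -> D} :=
  [ffun i => if i == ord0 then x else X i].

Definition depends_on_at_most (R : realType) (D : finType) (n k : nat)
  (g : {ffun 'I_n.+1 -> D} -> R) : Prop :=
  exists S : {set 'I_n.+1}, (#|S| <= k)%N /\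
    forall x y : {ffun 'I_n.+1 -> D}, (forall i, i \in S -> x i = y i) -> g x = g y.

(* E[ max_x f(x,X_1..X_n) - f(X_0,X_1..X_n) ] for X_i iid uniform on D *)
Definition expected_gap (R : realType) (D : finType) (n : nat)
  (f : {ffun 'I_n.+1 -> D} -> R) : R :=
  (#|D|%:R ^+ n.+1)^-1 *
    \sum_(X : {ffun 'I_n.+1 -> D}) (fmax (fun x => f (setx0 X x)) - f X).

(* max over x^+, x^-, x_1..x_n of f(x^+,x_1..x_n) - f(x^-,x_1..x_n)
   (coordinate 0 of X is ignored) *)
Definition max_range (R : realType) (D : finType) (n : nat)
  (f : {ffun 'I_n.+1 -> D} -> R) : R :=
  fmax (fun p : D * D * {ffun 'I_n.+1 -> D} =>
          f (setx0 p.2 p.1.1) - f (setx0 p.2 p.1.2)).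

(* Main.v *)
Require Import Defs.
From mathcomp Require Import all_boot all_order all_algebra.
From mathcomp Require Import reals ring lra.
Import Order.TTheory GRing.Theory Num.Theory.
Local Open Scope ring_scope.
Set Implicit Arguments. Unset Strict Implicit.

Definition setc (I D : finType) (Z : {ffun I -> D}) (i : I) (a : D) : {ffun I -> D} :=
  [ffun j => if j == i then a else Z j].

Definition mix (I D : finType) (U : {set I}) (y Z : {ffun I -> D}) : {ffun I -> D} :=
  [ffun j => if j \in U then y j else Z j].

Lemma setcK (I D : finType) (Z : {ffun I -> D}) i b : setc (setc Z i b) i (Z i) = Z.
Proof. by apply/ffunP => j; rewrite !ffunE; case: eqVneq => // ->. Qed.

Lemma sum_setc (R : realType) (I D : finType) (i : I) (h : {ffun I -> D} -> R) :
  \sum_(b : D) \sum_(Z : {ffun I -> D}) h (setc Z i b) = #|D|%:R * \sum_Z h Z.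
Proof.
rewrite pair_big /=.
pose phi := fun p : D * {ffun I -> D} => (p.2 i, setc p.2 i p.1).
have phiK : involutive phi.
  by move=> [b Z]; rewrite /phi /= setcK ffunE eqxx.
rewrite (reindex_inj (inv_inj phiK)) /=.
under eq_bigr => p _ do rewrite setcK.
rewrite -(pair_big predT predT (fun (b : D) (Z : {ffun I -> D}) => h Z)) /=.
by rewrite sumr_const cardT -cardE mulr_natl.
Qed.

Lemma sum_setc_le (R : realType) (I D : finType) (i : I) a (h : {ffun I -> D} -> R) :
  (forall X, 0 <= h X) ->
  \sum_(Z : {ffun I -> D}) h (setc Z i a) <= #|D|%:R * \sum_Z h Z.
Proof.
move=> h0; rewrite -(sum_setc i) (bigD1 a) //= lerDl.
by apply: sumr_ge0 => b _; apply: sumr_ge0.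
Qed.

Lemma mix0 (I D : finType) (y Z : {ffun I -> D}) : mix set0 y Z = Z.
Proof. by apply/ffunP => j; rewrite !ffunE inE. Qed.

Lemma mixD1 (I D : finType) (U : {set I}) i (y Z : {ffun I -> D}) : i \in U ->
  mix U y Z = setc (mix (U :\ i) y Z) i (y i).
Proof.
move=> iU; apply/ffunP => j; rewrite !ffunE !inE.
by case: eqVneq => [->|]; rewrite ?iU.
Qed.

Lemma sum_mix_le (R : realType) (I D : finType) (y : {ffun I -> D}) :
  forall (m : nat) (U : {set I}) (h : {ffun I -> D} -> R), #|U| = m ->
  (forall X, 0 <= h X) ->
  \sum_(Z : {ffun I -> D}) h (mix U y Z) <= #|D|%:R ^+ #|U| * \sum_Z h Z.
Proof.
elim=> [|m IH] U h Hm h0.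
  have -> : U = set0 by apply: cards0_eq.
  by rewrite cards0 expr0 mul1r; under eq_bigr => Z _ do rewrite mix0.
have [i iU] : exists i, i \in U by apply/set0Pn; rewrite -card_gt0 Hm.
under eq_bigr => Z _ do rewrite (mixD1 _ _ iU).
have HU : #|U :\ i| = m by move: Hm; rewrite (cardsD1 i U) iU => -[].
apply: le_trans (IH (U :\ i) (fun W => h (setc W i (y i))) HU (fun W => h0 _)) _.
rewrite Hm HU exprSr -mulrA ler_wpM2l ?exprn_ge0 ?ler0n //.
exact: sum_setc_le.
Qed.

Definition Eop (R : realType) (I D : finType) (U : {set I}) (g : {ffun I -> D} -> R)
  (y : {ffun I -> D}) : R :=
  (#|D|%:R ^+ #|I|)^-1 * \sum_(Z : {ffun I -> D}) g (mix U y Z).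

Lemma Eop_bound (R : realType) (I D : finType) (U : {set I}) (g : {ffun I -> D} -> R) y :
  `|Eop U g y| <= #|D|%:R ^+ #|U| * ((#|D|%:R ^+ #|I|)^-1 * \sum_Z `|g Z|).
Proof.
rewrite /Eop normrM normfV normrX normr_nat mulrCA ler_wpM2l ?invr_ge0 ?exprn_ge0 ?ler0n //.
apply: le_trans (ler_norm_sum _ _ _) _.
by apply: (@sum_mix_le R I D y #|U| U (fun Z => `|g Z|)) => // X.
Qed.

Lemma fmax_ge (R : realType) (A : finType) (g : A -> R) a : g a <= fmax g.
Proof.
rewrite /fmax; case: pickP => [a0 _|H]; last by have := H a.
have : a \in index_enum A by rewrite mem_index_enum.
elim: (index_enum A) => [//|b s IH]; rewrite inE big_cons => /orP [/eqP->|/IH H].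
  by rewrite le_max lexx.
by rewrite le_max H orbT.
Qed.

Lemma fmax_ex (R : realType) (A : finType) (g : A -> R) (a : A) :
  exists b, fmax g = g b.
Proof.
rewrite /fmax; case: pickP => [a0 _|H]; last by have := H a.
elim: (index_enum A) => [|c s [b IH]]; first by exists a0; rewrite big_nil.
rewrite big_cons IH; case: (leP (g c) (g b)) => H.
  by exists b.
by exists c.
Qed.

Lemma Eop_const (R : realType) (I D : finType) (U : {set I}) (g : {ffun I -> D} -> R) y c :
  (0 < #|D|)%N -> (forall Z, g (mix U y Z) = c) -> Eop U g y = c.
Proof.
move=> D0 H; rewrite /Eop (eq_bigr (fun _ => c)) // sumr_const cardT -cardE card_ffun.
rewrite -[c *+ _]mulr_natl natrX mulKf // expf_neq0 // pnatr_eq0 -lt0n //.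
Qed.

Definition tog (I : finType) (i : I) (W : {set I}) : {set I} :=
  if i \in W then W :\ i else i |: W.

Lemma in_tog (I : finType) (i j : I) W :
  (j \in tog i W) = if j == i then i \notin W else j \in W.
Proof.
rewrite /tog; case: (boolP (i \in W)) => Hi; case: (eqVneq j i) => [->|Hji];
  rewrite ?inE ?eqxx ?Hi ?(negbTE Hji) //.
Qed.

Lemma togK (I : finType) (i : I) : involutive (tog i).
Proof.
move=> W; apply/setP => j; rewrite !in_tog eqxx.
by case: eqVneq => [->|_]; rewrite ?negbK.
Qed.

Lemma sign_tog (R : realType) (I : finType) (i : I) W (m : nat) :
  (-1) ^+ (m + #|tog i W|) = - ((-1) ^+ (m + #|W|) : R).
Proof.
rewrite /tog; case: ifP => Hi.
  by rewrite [in RHS](cardsD1 i W) Hi addnCA exprS mulN1r opprK.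
by rewrite cardsU1 Hi /= addnCA exprS mulN1r.
Qed.

Lemma sign_tog' (R : realType) (I : finType) (i : I) W (m : nat) :
  (-1) ^+ (#|tog i W| + m) = - ((-1) ^+ (#|W| + m) : R).
Proof. by rewrite addnC sign_tog addnC. Qed.

Lemma sum_tog0 (R : realType) (I : finType) (i : I) (P : pred {set I})
  (h : {set I} -> R) :
  (forall W, P (tog i W) = P W) -> (forall W, P W -> h (tog i W) = - h W) ->
  \sum_(W | P W) h W = 0.
Proof.
move=> HP Hh.
have E : \sum_(W | P W) h W = - \sum_(W | P W) h W.
  rewrite {1}(reindex_inj (inv_inj (@togK I i))) /= -sumrN.
  apply: eq_big => [W|W]; first by rewrite /= HP.
  by move=> PW; rewrite Hh // -HP.
lra.
Qed.

Lemma sub_tog (I : finType) (i : I) (A W : {set I}) : i \notin A ->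
  (A \subset tog i W) = (A \subset W).
Proof.
move=> iA; apply/subsetP/subsetP => H j jA; have := H j jA; rewrite ?in_tog;
  case: eqVneq => [ji|] //; by rewrite -ji jA in iA.
Qed.

Lemma tog_sub (I : finType) (i : I) (A W : {set I}) : i \in A ->
  (tog i W \subset A) = (W \subset A).
Proof.
move=> iA; apply/subsetP/subsetP => H j.
  move=> jW; case: (eqVneq j i) => [->//|ji]; apply: H; by rewrite in_tog (negbTE ji).
by rewrite in_tog; case: eqVneq => [->//|_]; apply: H.
Qed.

Definition mob (R : realType) (I : finType) (psi : {set I} -> R) (S : {set I}) : R :=
  \sum_(U : {set I} | U \subset S) (-1) ^+ (#|S| + #|U|) * psi U.

Lemma mob0 (R : realType) (I : finType) (psi : {set I} -> R) (C S : {set I}) :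
  (forall U, psi U = psi (U :&: C)) -> ~~ (S \subset C) -> mob psi S = 0.
Proof.
move=> Hpsi /subsetPn [i iS iC]; apply: (sum_tog0 (i:=i)).
  by move=> W; rewrite tog_sub.
move=> W _; rewrite sign_tog mulNr; congr (- (_ * _)).
rewrite Hpsi [in RHS]Hpsi; congr psi; apply/setP => j; rewrite !inE in_tog.
case: eqVneq => // ->; by rewrite (negbTE iC) !andbF.
Qed.

Lemma mob_sum (R : realType) (I : finType) (psi : {set I} -> R) (C : {set I}) :
  \sum_(S : {set I} | S \subset C) mob psi S = psi C.
Proof.
rewrite /mob (exchange_big_dep (fun U : {set I} => U \subset C)) /=; last first.
  by move=> S U SC US; exact: subset_trans US SC.
rewrite (bigD1 C) //= [X in _ + X]big1 ?addr0.
  rewrite (big_pred1 C); last by move=> S; rewrite /= eqEsubset.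
  by rewrite -signr_odd oddD addbb expr0 mul1r.
move=> U /andP [UC UneC].
have /properP [_ [i iC iU]] : U \proper C by rewrite properEneq UneC.
rewrite -big_distrl /= (sum_tog0 (i:=i)) ?mul0r //.
  by move=> W; rewrite tog_sub // sub_tog.
by move=> W _; rewrite sign_tog'.
Qed.
Lemma fmax_ext (R : realType) (A : finType) (g h : A -> R) :
  (forall a, g a = h a) -> fmax g = fmax h.
Proof.
move=> E; rewrite /fmax; case: pickP => [a0 _|//].
rewrite E; apply: eq_bigr => a _; exact: E.
Qed.

Lemma setx0K (D : finType) n (X : {ffun 'I_n.+1 -> D}) b x :
  setx0 (setx0 X b) x = setx0 X x.
Proof. by apply/ffunP => j; rewrite !ffunE; case: eqVneq. Qed.

Theorem theorem2 (R : realType) (k : nat) (hk : (1 <= k)%N) :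
  exists c : R, 0 < c /\
    forall (D : finType) (L n T : nat), #|D| = (2 ^ L)%N -> (1 <= T)%N ->
    forall fs : 'I_T -> {ffun 'I_n.+1 -> D} -> R,
      (forall t, depends_on_at_most k (fs t)) ->
      let f := fun x => \sum_(t < T) fs t x in
      c / T%:R / (#|D|%:R ^+ k) * max_range f <= expected_gap f.
Proof.
exists ((2 ^ k * 2 ^ k)%N%:R)^-1; split.
  by rewrite invr_gt0 ltr0n muln_gt0 expn_gt0.
move=> D L n T HD HT fs Hdep; rewrite /=; set f := (fun x => \sum_(t < T) fs t x).
have D0 : (0 < #|D|)%N by rewrite HD expn_gt0.
have [d _] : exists d : D, d \in D by apply/card_gt0P.
have [St HSt] : exists St : 'I_T -> {set 'I_n.+1}, forall t, (#|St t| <= k)%N /\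
   (forall x y : {ffun 'I_n.+1 -> D}, (forall i, i \in St t -> x i = y i) -> fs t x = fs t y).
  exact: (@fin_all_exists _ (fun _ => {set 'I_n.+1}) (fun t S => (#|S| <= k)%N /\ forall x y : {ffun 'I_n.+1 -> D}, (forall i, i \in S -> x i = y i) -> fs t x = fs t y) Hdep).
have [[[xp xm] Y] HM] := fmax_ex
  (fun p : D * D * {ffun 'I_n.+1 -> D} => f (setx0 p.2 p.1.1) - f (setx0 p.2 p.1.2))
  (d, d, [ffun=> d]).
rewrite /max_range HM /=.
set N : R := #|D|%:R.
have N1 : 1 <= N by rewrite /N ler1n.
have N0 : N ^+ n.+1 != 0 by rewrite expf_neq0 // /N pnatr_eq0 -lt0n.
pose G := fun X => f (setx0 X xp) - f (setx0 X xm).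
pose gt := fun t X => fs t (setx0 X xp) - fs t (setx0 X xm).
pose Ct := fun t => if ord0 \in St t then St t :\ ord0 else set0.
have HG : forall X, G X = \sum_t gt t X by move=> X; rewrite /G /f -sumrB.
have Ck : forall t, (#|Ct t| <= k.-1)%N.
  move=> t; rewrite /Ct; case: ifP => H; last by rewrite cards0.
  have := (HSt t).1; rewrite (cardsD1 ord0) H add1n => h.
  by rewrite -ltnS (ltn_predK hk).
have Cdep : forall t (X Z : {ffun 'I_n.+1 -> D}), (forall i, i \in Ct t -> X i = Z i) -> gt t X = gt t Z.
  move=> t X Z; rewrite /gt /Ct; case: ifP => H0 H.
    have E : forall a, fs t (setx0 X a) = fs t (setx0 Z a).
      move=> a; apply: (HSt t).2 => i iS; rewrite !ffunE; case: eqVneq => // ni.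
      by apply: H; rewrite in_setD1 ni iS.
    by rewrite !E.
  have E : forall W, fs t (setx0 W xp) = fs t (setx0 W xm).
    move=> W; apply: (HSt t).2 => i iS; rewrite !ffunE; case: eqVneq => [ei|//].
    by rewrite ei H0 in iS.
  by rewrite !E !subrr.
pose phi := fun t U => Eop U (gt t) Y.
have phiC : forall t U, phi t U = phi t (U :&: Ct t).
  move=> t U; rewrite /phi /Eop; congr (_ * _); apply: eq_bigr => Z _.
  by apply: Cdep => i iC; rewrite !ffunE inE iC andbT.
have phiCt : forall t, phi t (Ct t) = gt t Y.
  move=> t; apply: Eop_const => // Z.
  by apply: Cdep => i iC; rewrite ffunE iC.
have phiG : forall U, Eop U G Y = \sum_t phi t U.
  move=> U; rewrite /phi /Eop -mulr_sumr; congr (_ * _).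
  under eq_bigr => Z _ do rewrite HG.
  exact: exchange_big.
pose F := \bigcup_(t < T) powerset (Ct t).
have Fmem : forall t (S : {set 'I_n.+1}), S \subset Ct t -> S \in F.
  by move=> t S H; apply/bigcupP; exists t => //; rewrite inE.
have FC : forall S : {set 'I_n.+1}, S \in F -> (#|S| <= k.-1)%N.
  move=> S /bigcupP [t _]; rewrite inE => SC.
  exact: leq_trans (subset_leq_card SC) (Ck t).
have decomp : G Y = \sum_(S in F) mob (fun U => Eop U G Y) S.
  have lin : forall S, mob (fun U => Eop U G Y) S = \sum_t mob (phi t) S.
    move=> S; rewrite /mob; under eq_bigr => U _ do rewrite phiG mulr_sumr.
    exact: exchange_big.
  under eq_bigr => S _ do rewrite lin.
  rewrite exchange_big HG; apply: eq_bigr => t _.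
  rewrite (bigID (fun S : {set 'I_n.+1} => S \subset Ct t)) /= [X in _ + X]big1 ?addr0; last first.
    move=> S; case/andP => _ nS; exact: mob0 (phiC t) nS.
  rewrite -phiCt -(mob_sum (phi t) (Ct t)); apply: eq_bigl => S.
  by case SC: (S \subset Ct t); rewrite ?andbT ?andbF // (Fmem t S SC).
set A := (N ^+ n.+1)^-1 * \sum_Z `|G Z|.
have A0 : 0 <= A by rewrite /A mulr_ge0 ?invr_ge0 ?exprn_ge0 ?ler0n // sumr_ge0.
have Nge0 : 0 <= N by apply: le_trans N1.
have NA : 0 <= N ^+ k.-1 * A by rewrite mulr_ge0 ?exprn_ge0.
have cardF : (#|F| <= T * 2 ^ k)%N.
  apply: (@leq_trans (\sum_(t < T) #|powerset (Ct t)|)).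
    rewrite /F; apply: (big_ind2 (fun (A1 : {set {set 'I_n.+1}}) (m : nat) => #|A1| <= m)%N) => //.
      by rewrite cards0.
    by move=> A1 m1 A2 m2 h1 h2; apply: leq_trans (leq_card_setU A1 A2).1 (leq_add h1 h2).
  apply: (@leq_trans (\sum_(t < T) 2 ^ k)%N).
    by apply: leq_sum => t _; rewrite card_powerset leq_pexp2l // (leq_trans (Ck t)) // leq_pred.
  by rewrite sum_nat_const cardT -cardE card_ord.
have H1 : forall S, S \in F -> `|mob (fun U => Eop U G Y) S| <= (N ^+ k.-1 * A) * (2 ^ k)%:R.
  move=> S SF; rewrite /mob; apply: le_trans (ler_norm_sum _ _ _) _.
  apply: (@le_trans _ _ (\sum_(U : {set 'I_n.+1} | U \subset S) N ^+ k.-1 * A)).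
    apply: ler_sum => U US; rewrite normrM normrX normrN1 expr1n mul1r.
    apply: le_trans (Eop_bound U G Y) _; rewrite card_ord ler_wpM2r //.
    apply: ler_weXn2l => //; exact: leq_trans (subset_leq_card US) (FC S SF).
  rewrite (eq_bigl (fun U => U \in powerset S)); last by move=> U; rewrite inE.
  rewrite sumr_const card_powerset -[X in X <= _]mulr_natr ler_wpM2l //.
  by rewrite ler_nat leq_pexp2l // (leq_trans (FC S SF)) // leq_pred.
have bound : G Y <= N ^+ k.-1 * A * (2 ^ k * (T * 2 ^ k))%N%:R.
  apply: le_trans (ler_norm _) _; rewrite decomp.
  apply: le_trans (ler_norm_sum _ _ _) _.
  apply: le_trans (ler_sum _ H1) _.
  by rewrite sumr_const -mulrnAr ler_wpM2l // -[X in X <= _]mulr_natr -natrM ler_nat leq_mul2l cardF orbT.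
have gap0 : forall X b, 0 <= fmax (fun x => f (setx0 (setx0 X b) x)) - f (setx0 X b).
  move=> X b; rewrite subr_ge0; have := fmax_ge (fun x => f (setx0 (setx0 X b) x)) b.
  by rewrite setx0K.
have gapG : \sum_X `|G X| <= N * \sum_X (fmax (fun x => f (setx0 X x)) - f X).
  rewrite -(sum_setc ord0 (fun X => fmax (fun x => f (setx0 X x)) - f X)) exchange_big /=.
  apply: ler_sum => X _.
  have key : forall b0, fmax (fun x => f (setx0 (setx0 X b0) x)) - f (setx0 X b0) <=
      \sum_b (fmax (fun x => f (setx0 (setc X ord0 b) x)) - f (setc X ord0 b)).
    move=> b0; rewrite (bigD1 b0) //= lerDl; apply: sumr_ge0 => b _; exact: gap0.
  have fe : forall b, fmax (fun x => f (setx0 (setx0 X b) x)) = fmax (fun x => f (setx0 X x)).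
    by move=> b; apply: fmax_ext => x; rewrite setx0K.
  case: (lerP 0 (G X)) => HGX.
    rewrite ger0_norm //; apply: le_trans (key xm); rewrite fe /G lerD2r.
    exact: (fmax_ge (fun x => f (setx0 X x)) xp).
  rewrite ltr0_norm //; apply: le_trans (key xp); rewrite fe /G opprB lerD2r.
  exact: (fmax_ge (fun x => f (setx0 X x)) xm).
have HA : A <= N * expected_gap f.
  rewrite /A /expected_gap mulrCA ler_wpM2l ?invr_ge0 ?exprn_ge0 ?ler0n //.
clearbody A.
have HGY : G Y <= N ^+ k * (2 ^ k * (T * 2 ^ k))%N%:R * expected_gap f.
  apply: le_trans bound _.
  have -> : N ^+ k = N ^+ k.-1 * N by rewrite -exprSr prednK.
  rewrite -!mulrA ler_wpM2l ?exprn_ge0 //.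
  by rewrite [X in _ <= X]mulrCA [X in X <= _]mulrC ler_wpM2l ?ler0n.
have Npos : 0 < N by apply: lt_le_trans N1.
have c0 : 0 <= (2 ^ k * 2 ^ k)%N%:R^-1 / T%:R / N ^+ k :> R.
  by rewrite !mulr_ge0 ?invr_ge0 ?exprn_ge0 ?ler0n // ltW.
apply: le_trans (ler_wpM2l c0 HGY) _.
rewrite le_eqVlt; apply/orP; left; apply/eqP.
have T0 : T%:R != 0 :> R by rewrite pnatr_eq0 -lt0n.
have Nk0 : N ^+ k != 0 by rewrite expf_neq0 // gt_eqF.
have K0 : (2 ^ k * 2 ^ k)%N%:R != 0 :> R by rewrite pnatr_eq0 muln_eq0 negb_or !expn_eq0.
rewrite (_ : (2 ^ k * (T * 2 ^ k))%N%:R = T%:R * (2 ^ k * 2 ^ k)%N%:R :> R); last first.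
  by rewrite -natrM mulnCA mulnA.
field.
by rewrite Nk0 T0 pnatr_eq0 expn_eq0.
Qed.
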